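(* Let $k$ be a field, $G$ a finite group, $W$ a simple $kB(G,G)$-module, and $P$ a minimal group for $W$. Then: (1) $W$ is isomorphic to a quotient of the $kB(G,G)$-module $k\bar B(G,P)$; (2) if $W$ is isomorphic to a quotient of the $kB(G,G)$-module $k\bar B(G,H)$ for some finite group $H$, then $H$ is isomorphic to a subquotient of $P$.
   Context: $kB(X,Y)=k\otimes_{\mathbb Z}B(X,Y)$, $B(X,Y)$ the Grothendieck group of finite $(X,Y)$-bisets; composition $U\times_YV$ extended bilinearly, so $kB(G,G)$ is an algebra acting on $kB(G,H)$. A minimal group for a simple $kB(G,G)$-module $W$ is a finite group $P$ of minimal order such that $B(G,P)B(P,G)W\ne0$ (compositions of elements of $B(G,P)$ and $B(P,G)$ acting on $W$). A subquotient of $P$ is $S/T$ with $T\trianglelefteq S\le P$. $K\sqsubset H$ means $K$ is isomorphic to a subquotient of $H$ with $|K|<|H|$; $kI(G,H)=\sum_{K\sqsubset H}kB(G,K)kB(K,H)$, a $kB(G,G)$-submodule, and $k\bar B(G,H)=kB(G,H)/kI(G,H)$. *)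

(* Defs.v *)
From HB Require Import structures.
From mathcomp Require Import all_boot all_fingroup all_order all_algebra.
Set Implicit Arguments.
Unset Strict Implicit.
Unset Printing Implicit Defensive.
Import GRing.Theory.
Local Open Scope ring_scope.

(* Finite bisets.  A (X,Y)-biset is a finite set U with a left action of X    *)
(* and a right action of Y which commute; we record the two-sided action      *)
(*   bact x u y = x . u . y                                                   *)
(* and require the axioms only for x in X, y in Y (predicate [is_biset]).     *)

Record biset (xT yT : finGroupType) := Biset {
  bcar :> finType;
  bact : xT -> bcar -> yT -> bcar }.
Arguments bact {xT yT} b x u y.

Definition is_biset (xT yT : finGroupType) (X : {set xT}) (Y : {set yT})
    (U : biset xT yT) : Prop :=
  (forall u, bact U 1%g u 1%g = u) /\
  (forall x1 x2 y1 y2 u, x1 \in X -> x2 \in X -> y1 \in Y -> y2 \in Y ->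
     bact U x1 (bact U x2 u y2) y1 = bact U (x1 * x2)%g u (y2 * y1)%g).

Definition biset_iso (xT yT : finGroupType) (X : {set xT}) (Y : {set yT})
    (U V : biset xT yT) : Prop :=
  exists h : U -> V, bijective h /\
    forall x u y, x \in X -> y \in Y -> h (bact U x u y) = bact V x (h u) y.

Definition bunion (xT yT : finGroupType) (U V : biset xT yT) : biset xT yT :=
  @Biset xT yT (U + V)%type
    (fun x s y => match s with
                  | inl u => inl (bact U x u y)
                  | inr v => inr (bact V x v y) end).

Definition bid (gT : finGroupType) (G : {group gT}) : biset gT gT :=
  @Biset gT gT {g : gT | g \in G}
    (fun x g y => insubd g (x * val g * y)%g).

(* composition U x_Y V : the set of classes of U x V under                   *)
(* (u.y, v) ~ (u, y.v), y in Y; the class of (u,v) is {(u.y, y^-1.v)}.      *)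
Section Composition.
Variables (xT yT zT : finGroupType) (Y : {group yT}).
Variables (U : biset xT yT) (V : biset yT zT).

Definition borb (p : U * V) : {set U * V} :=
  [set (bact U 1%g p.1 y, bact V y^-1%g p.2 1%g) | y in Y].

Definition bcomp_car := {A : {set U * V} | [exists p, A == borb p]}.

Lemma borb_in (p : U * V) : [exists q, borb p == borb q].
Proof. by apply/existsP; exists p. Qed.

Definition bcomp_cls (p : U * V) : bcomp_car := exist _ (borb p) (borb_in p).

Definition bcomp_act (x : xT) (A : bcomp_car) (z : zT) : bcomp_car :=
  match [pick p in val A] with
  | Some p => bcomp_cls (bact U x p.1 1%g, bact V 1%g p.2 z)
  | None => A
  end.

Definition bcomp : biset xT zT := @Biset xT zT bcomp_car bcomp_act.
End Composition.

(* kB(G,G)-modules.  Since kB(X,Y) = k (x) B(X,Y) and B(X,Y) is the          *)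
(* Grothendieck group of finite (X,Y)-bisets, a k-linear map out of kB(X,Y)  *)
(* is the same as an assignment on finite bisets which is invariant under    *)
(* isomorphism and additive on disjoint unions.  A kB(G,G)-module structure   *)
(* on a k-vector space W is thus given by rho : bisets -> (W -> W).          *)

Definition is_Bmodule (k : fieldType) (W : lmodType k) (gT : finGroupType)
    (G : {group gT}) (rho : biset gT gT -> W -> W) : Prop :=
  [/\ (forall U, is_biset G G U -> forall (a : k) (u v : W),
          rho U (a *: u + v) = a *: rho U u + rho U v),
      (forall U V, is_biset G G U -> is_biset G G V -> biset_iso G G U V ->
          forall w, rho U w = rho V w),
      (forall U V, is_biset G G U -> is_biset G G V ->
          forall w, rho (bunion U V) w = rho U w + rho V w),
      (forall U V, is_biset G G U -> is_biset G G V ->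
          forall w, rho (bcomp G U V) w = rho U (rho V w)) &
      (forall w, rho (bid G) w = w)].

Definition is_submodule (k : fieldType) (W : lmodType k) (gT : finGroupType)
    (G : {group gT}) (rho : biset gT gT -> W -> W) (S : W -> Prop) : Prop :=
  [/\ S 0,
      (forall u v, S u -> S v -> S (u + v)),
      (forall (a : k) u, S u -> S (a *: u)) &
      (forall U u, is_biset G G U -> S u -> S (rho U u))].

Definition simple_Bmodule (k : fieldType) (W : lmodType k) (gT : finGroupType)
    (G : {group gT}) (rho : biset gT gT -> W -> W) : Prop :=
  [/\ is_Bmodule G rho,
      exists w : W, w != 0 &
      forall S, is_submodule G rho S ->
        (forall w, S w) \/ (forall w, S w -> w = 0)].

Definition passes_through (k : fieldType) (W : lmodType k) (gT : finGroupType)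
    (G : {group gT}) (rho : biset gT gT -> W -> W)
    (qT : finGroupType) (Q : {group qT}) : Prop :=
  exists (U : biset gT qT) (V : biset qT gT) (w : W),
    [/\ is_biset G Q U, is_biset Q G V & rho (bcomp Q U V) w != 0].

Definition minimal_group (k : fieldType) (W : lmodType k) (gT : finGroupType)
    (G : {group gT}) (rho : biset gT gT -> W -> W)
    (pT : finGroupType) (P : {group pT}) : Prop :=
  passes_through G rho P /\
  forall (qT : finGroupType) (Q : {group qT}),
    (#|Q| < #|P|)%N -> ~ passes_through G rho Q.

Definition subquotient (kT hT : finGroupType) (K : {group kT})
    (H : {group hT}) : Prop :=
  exists (S T : {group hT}), [/\ S \subset H, (T <| S)%g & K \isog (S / T)%g].

Definition sqlt (kT hT : finGroupType) (K : {group kT}) (H : {group hT})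
  : Prop := subquotient K H /\ (#|K| < #|H|)%N.

Definition is_Bhom (k : fieldType) (W : lmodType k) (gT : finGroupType)
    (G : {group gT}) (rho : biset gT gT -> W -> W)
    (hT : finGroupType) (H : {group hT}) (f : biset gT hT -> W) : Prop :=
  [/\ (forall U V, is_biset G H U -> is_biset G H V -> biset_iso G H U V ->
          f U = f V),
      (forall U V, is_biset G H U -> is_biset G H V ->
          f (bunion U V) = f U + f V) &
      (forall U V, is_biset G G U -> is_biset G H V ->
          f (bcomp G U V) = rho U (f V))].

Definition kills_I (k : fieldType) (W : lmodType k) (gT : finGroupType)
    (G : {group gT}) (hT : finGroupType) (H : {group hT})
    (f : biset gT hT -> W) : Prop :=
  forall (kT : finGroupType) (K : {group kT}), sqlt K H ->
    forall (U : biset gT kT) (V : biset kT hT),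
      is_biset G K U -> is_biset K H V -> f (bcomp K U V) = 0.

Definition Bhom_onto (k : fieldType) (W : lmodType k) (gT : finGroupType)
    (G : {group gT}) (hT : finGroupType) (H : {group hT})
    (f : biset gT hT -> W) : Prop :=
  forall w : W, exists (n : nat) (c : 'I_n -> k) (V : 'I_n -> biset gT hT),
    (forall i, is_biset G H (V i)) /\ w = \sum_(i < n) c i *: f (V i).

(* W is isomorphic to a quotient of the kB(G,G)-module kBbar(G,H):
   there is a surjective kB(G,G)-homomorphism kB(G,H) -> W vanishing on
   kI(G,H) *)
Definition quotient_of_Bbar (k : fieldType) (W : lmodType k) (gT : finGroupType)
    (G : {group gT}) (rho : biset gT gT -> W -> W)
    (hT : finGroupType) (H : {group hT}) : Prop :=
  exists f : biset gT hT -> W,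
    [/\ is_Bhom G rho H f, kills_I G H f & Bhom_onto G H f].

(* Main.v *)
Require Import Defs.
From HB Require Import structures.
From mathcomp Require Import all_boot all_fingroup all_order all_algebra.
Set Implicit Arguments.
Unset Strict Implicit.
Unset Printing Implicit Defensive.

Module L1.

Section Basic.
Variables (xT yT : finGroupType) (X : {group xT}) (Y : {group yT}).
Variables (U : biset xT yT) (HU : is_biset X Y U).

Lemma bact1 u : bact U 1%g u 1%g = u.
Proof. by case: HU. Qed.

Lemma bactM x1 x2 y1 y2 u : x1 \in X -> x2 \in X -> y1 \in Y -> y2 \in Y ->
  bact U x1 (bact U x2 u y2) y1 = bact U (x1 * x2)%g u (y2 * y1)%g.
Proof. by case: HU => _; apply. Qed.
End Basic.

Section Comp.
Variables (xT yT zT : finGroupType) (X : {group xT}) (Y : {group yT}) (Z : {group zT}).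
Variables (U : biset xT yT) (V : biset yT zT).
Hypotheses (HU : is_biset X Y U) (HV : is_biset Y Z V).

Local Notation cls := (@bcomp_cls _ _ _ Y U V).

Lemma mem_borb (p q : U * V) : reflect (exists2 y, y \in Y &
   q = (bact U 1%g p.1 y, bact V y^-1%g p.2 1%g)) (q \in borb Y p).
Proof. exact: imsetP. Qed.

Lemma borb_refl (p : U * V) : p \in borb Y p.
Proof.
apply/mem_borb; exists 1%g => //; rewrite invg1 (bact1 HU) (bact1 HV).
by case: p.
Qed.

Lemma borb_sub (p q : U * V) : q \in borb Y p -> {subset borb Y q <= borb Y p}.
Proof.
move=> /mem_borb [y Hy ->] r /mem_borb [y' Hy' ->] /=.
apply/mem_borb; exists (y * y')%g; first by rewrite groupM.
rewrite (bactM HU) ?group1 // (bactM HV) ?groupV ?group1 // ?mulg1 ?mul1g.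
by rewrite invMg.
Qed.

Lemma borb_sym (p q : U * V) : q \in borb Y p -> p \in borb Y q.
Proof.
move=> /mem_borb [y Hy ->] /=; apply/mem_borb; exists y^-1%g; first by rewrite groupV.
rewrite (bactM HU) ?groupV ?group1 // (bactM HV) ?groupV ?group1 // ?mulg1 ?mul1g.
by rewrite ?invgK ?mulgV ?mulVg (bact1 HU) (bact1 HV); case: p.
Qed.

Lemma borb_eq (p q : U * V) : q \in borb Y p -> borb Y q = borb Y p.
Proof.
move=> H; apply/setP => r; apply/idP/idP; first exact: borb_sub.
by apply: borb_sub; apply: borb_sym.
Qed.

Lemma cls_eq (p q : U * V) : q \in borb Y p -> cls q = cls p.
Proof. by move=> H; apply: val_inj => /=; apply: borb_eq. Qed.

Lemma cls_eqP (p q : U * V) : cls p = cls q -> q \in borb Y p.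
Proof. move=> /(congr1 val) /= ->; exact: borb_refl. Qed.

Lemma cls_y (p : U * V) y : y \in Y ->
  cls (bact U 1%g p.1 y, bact V y^-1%g p.2 1%g) = cls p.
Proof. by move=> Hy; apply: cls_eq; apply/mem_borb; exists y. Qed.

Definition crep (A : bcomp_car Y U V) : U * V := xchoose (existsP (valP A)).

Lemma crepK A : cls (crep A) = A.
Proof.
apply: val_inj => /=; apply/esym/eqP; exact: (xchooseP (existsP (valP A))).
Qed.

Lemma cls_surj A : exists p, A = cls p.
Proof. by exists (crep A); rewrite crepK. Qed.

Lemma clift (T : Type) (g : U * V -> T) :
  (forall p y, y \in Y -> g (bact U 1%g p.1 y, bact V y^-1%g p.2 1%g) = g p) ->
  forall p, g (crep (cls p)) = g p.
Proof.
move=> Hg p; have := cls_eqP (esym (crepK (cls p))).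
by move=> /mem_borb [y Hy ->]; rewrite Hg.
Qed.

Lemma bcomp_actE x z (p : U * V) : x \in X -> z \in Z ->
  bact (bcomp Y U V) x (cls p) z = cls (bact U x p.1 1%g, bact V 1%g p.2 z).
Proof.
move=> Hx Hz /=; rewrite /bcomp_act; case: pickP => [q Hq | H0]; last first.
  by have := H0 p; rewrite /= borb_refl.
move: Hq => /mem_borb [y Hy ->] /=.
rewrite -(@cls_y (bact U x p.1 1%g, bact V 1%g p.2 z) y Hy) /=.
by rewrite !(bactM HU) ?(bactM HV) ?group1 ?groupV // ?mulg1 ?mul1g.
Qed.

Lemma is_biset_bcomp : is_biset X Z (bcomp Y U V).
Proof.
split.
  move=> A; have [p ->] := cls_surj A.
  by rewrite bcomp_actE ?group1 // (bact1 HU) (bact1 HV); case: p.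
move=> x1 x2 z1 z2 A Hx1 Hx2 Hz1 Hz2; have [p ->] := cls_surj A.
rewrite !bcomp_actE ?groupM //= (bactM HU) ?(bactM HV) ?group1 //.
by rewrite ?mulg1 ?mul1g.
Qed.
End Comp.

End L1.
Import L1.

Module L2.

Section Iso.
Variables (xT yT : finGroupType) (X : {group xT}) (Y : {group yT}).

Lemma biset_iso_refl (U : biset xT yT) : biset_iso X Y U U.
Proof. by exists id; split => //; exists id. Qed.

Lemma biset_iso_sym (U V : biset xT yT) : biset_iso X Y U V -> biset_iso X Y V U.
Proof.
move=> [h [[g hg gh] Hh]]; exists g; split; first by exists h.
move=> x v y Hx Hy; apply: (can_inj hg); by rewrite Hh // !gh.
Qed.

Lemma biset_iso_trans (U V W : biset xT yT) :
  biset_iso X Y U V -> biset_iso X Y V W -> biset_iso X Y U W.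
Proof.
move=> [h [bh Hh]] [h' [bh' Hh']]; exists (h' \o h); split.
  exact: bij_comp.
by move=> x u y Hx Hy /=; rewrite Hh // Hh'.
Qed.

Lemma is_biset_bunion (U V : biset xT yT) :
  is_biset X Y U -> is_biset X Y V -> is_biset X Y (bunion U V).
Proof.
move=> HU HV; split; first by case=> [u|v] /=; rewrite ?(bact1 HU) ?(bact1 HV).
by move=> x1 x2 y1 y2 [u|v] ? ? ? ? /=; rewrite ?(bactM HU) ?(bactM HV).
Qed.
End Iso.

Section CompMap.
Variables (xT yT zT : finGroupType) (X : {group xT}) (Y : {group yT}) (Z : {group zT}).
Variables (U U' : biset xT yT) (V V' : biset yT zT).
Hypotheses (HU : is_biset X Y U) (HV : is_biset Y Z V).
Hypotheses (HU' : is_biset X Y U') (HV' : is_biset Y Z V').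

Lemma bcomp_map (hU : U -> U') (hV : V -> V') :
  (forall x u y, x \in X -> y \in Y -> hU (bact U x u y) = bact U' x (hU u) y) ->
  (forall x u y, x \in Y -> y \in Z -> hV (bact V x u y) = bact V' x (hV u) y) ->
  exists F : bcomp Y U V -> bcomp Y U' V',
    (forall p, F (bcomp_cls Y p) = bcomp_cls Y (hU p.1, hV p.2)) /\
    (forall x A z, x \in X -> z \in Z -> F (bact _ x A z) = bact _ x (F A) z).
Proof.
move=> EU EV.
pose g (p : U * V) := bcomp_cls Y (U := U') (V := V') (hU p.1, hV p.2).
have Hg : forall p y, y \in Y -> g (bact U 1%g p.1 y, bact V y^-1%g p.2 1%g) = g p.
  move=> [u v] y Hy; rewrite /g /= EU ?EV ?group1 ?groupV //.
  exact: (cls_y HU' HV' (hU u, hV v) Hy).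
exists (fun A => g (crep A)); split; first exact: (clift HU HV).
move=> x A z Hx Hz; have [p ->] := cls_surj A.
rewrite (bcomp_actE HU HV) // !(clift HU HV Hg) /g (bcomp_actE HU' HV') //=.
by rewrite EU ?EV ?group1.
Qed.
End CompMap.

Section CompIso.
Variables (xT yT zT : finGroupType) (X : {group xT}) (Y : {group yT}) (Z : {group zT}).
Variables (U U' : biset xT yT) (V V' : biset yT zT).
Hypotheses (HU : is_biset X Y U) (HV : is_biset Y Z V).
Hypotheses (HU' : is_biset X Y U') (HV' : is_biset Y Z V').

Lemma bcomp_iso : biset_iso X Y U U' -> biset_iso Y Z V V' ->
  biset_iso X Z (bcomp Y U V) (bcomp Y U' V').
Proof.
move=> IU IV.
have [hU [[gU hgU ghU] EU]] := IU.
have [gU' [_ EgU]] := biset_iso_sym IU.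
have [hV [[gV hgV ghV] EV]] := IV.
have [gV' [_ EgV]] := biset_iso_sym IV.
(* gU' need not be gU; use gU with equivariance from sym proof *)
have EgU2 : forall x u y, x \in X -> y \in Y -> gU (bact U' x u y) = bact U x (gU u) y.
  by move=> x u y Hx Hy; apply: (can_inj hgU); rewrite EU // !ghU.
have EgV2 : forall x u y, x \in Y -> y \in Z -> gV (bact V' x u y) = bact V x (gV u) y.
  by move=> x u y Hx Hy; apply: (can_inj hgV); rewrite EV // !ghV.
have [F [FE FA]] := bcomp_map HU HV HU' HV' EU EV.
have [G [GE _]] := bcomp_map HU' HV' HU HV EgU2 EgV2.
exists F; split => //; exists G.
  by move=> A; have [[u v] ->] := cls_surj A; rewrite FE GE /= !hgU !hgV.
by move=> A; have [[u v] ->] := cls_surj A; rewrite GE FE /= !ghU !ghV.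
Qed.
End CompIso.

End L2.
Import L2.

Module L3.

Section Distrib.
Variables (xT yT zT : finGroupType) (X : {group xT}) (Y : {group yT}) (Z : {group zT}).

Lemma bcomp_bunionL (U U' : biset xT yT) (V : biset yT zT) :
  is_biset X Y U -> is_biset X Y U' -> is_biset Y Z V ->
  biset_iso X Z (bcomp Y (bunion U U') V) (bunion (bcomp Y U V) (bcomp Y U' V)).
Proof.
move=> HU HU' HV; have HUU := is_biset_bunion HU HU'.
pose g (p : bunion U U' * V) : bunion (bcomp Y U V) (bcomp Y U' V) :=
  match p.1 with inl u => inl (bcomp_cls Y (u, p.2))
               | inr u => inr (bcomp_cls Y (u, p.2)) end.
have Hg : forall p y, y \in Y -> g (bact _ 1%g p.1 y, bact V y^-1%g p.2 1%g) = g p.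
  move=> [[u|u] v] y Hy; rewrite /g /=.
    by rewrite (cls_y HU HV (u, v) Hy).
  by rewrite (cls_y HU' HV (u, v) Hy).
pose g1 (p : U * V) : bcomp Y (bunion U U') V := bcomp_cls Y (U := bunion U U') (V := V) (inl p.1, p.2).
have Hg1 : forall p y, y \in Y -> g1 (bact _ 1%g p.1 y, bact V y^-1%g p.2 1%g) = g1 p.
  by move=> [u v] y Hy; rewrite /g1 /=; exact: (cls_y HUU HV (inl u, v) Hy).
pose g2 (p : U' * V) : bcomp Y (bunion U U') V := bcomp_cls Y (U := bunion U U') (V := V) (inr p.1, p.2).
have Hg2 : forall p y, y \in Y -> g2 (bact _ 1%g p.1 y, bact V y^-1%g p.2 1%g) = g2 p.
  by move=> [u v] y Hy; rewrite /g2 /=; exact: (cls_y HUU HV (inr u, v) Hy).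
exists (fun A => g (crep A)); split.
  exists (fun s => match s with inl A => g1 (crep A) | inr A => g2 (crep A) end).
    move=> A; have [[[u|u] v] ->] := cls_surj A; rewrite (clift HUU HV Hg) /g /=.
      by rewrite (clift HU HV Hg1).
    by rewrite (clift HU' HV Hg2).
  case=> A; have [[u v] ->] := cls_surj A.
    by rewrite (clift HU HV Hg1) /g1 (clift HUU HV Hg).
  by rewrite (clift HU' HV Hg2) /g2 (clift HUU HV Hg).
move=> x A z Hx Hz; have [[[u|u] v] ->] := cls_surj A;
  rewrite (bcomp_actE HUU HV) // (clift HUU HV Hg) (clift HUU HV Hg) /g /=.
  by congr inl; symmetry; exact: (bcomp_actE HU HV (u, v) Hx Hz).
by congr inr; symmetry; exact: (bcomp_actE HU' HV (u, v) Hx Hz).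
Qed.

Lemma bcomp_bunionR (U : biset xT yT) (V V' : biset yT zT) :
  is_biset X Y U -> is_biset Y Z V -> is_biset Y Z V' ->
  biset_iso X Z (bcomp Y U (bunion V V')) (bunion (bcomp Y U V) (bcomp Y U V')).
Proof.
move=> HU HV HV'; have HVV := is_biset_bunion HV HV'.
pose g (p : U * bunion V V') : bunion (bcomp Y U V) (bcomp Y U V') :=
  match p.2 with inl v => inl (bcomp_cls Y (p.1, v))
               | inr v => inr (bcomp_cls Y (p.1, v)) end.
have Hg : forall p y, y \in Y -> g (bact U 1%g p.1 y, bact _ y^-1%g p.2 1%g) = g p.
  move=> [u [v|v]] y Hy; rewrite /g /=.
    by rewrite (cls_y HU HV (u, v) Hy).
  by rewrite (cls_y HU HV' (u, v) Hy).
pose g1 (p : U * V) : bcomp Y U (bunion V V') := bcomp_cls Y (U := U) (V := bunion V V') (p.1, inl p.2).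
have Hg1 : forall p y, y \in Y -> g1 (bact U 1%g p.1 y, bact V y^-1%g p.2 1%g) = g1 p.
  by move=> [u v] y Hy; rewrite /g1 /=; exact: (cls_y HU HVV (u, inl v) Hy).
pose g2 (p : U * V') : bcomp Y U (bunion V V') := bcomp_cls Y (U := U) (V := bunion V V') (p.1, inr p.2).
have Hg2 : forall p y, y \in Y -> g2 (bact U 1%g p.1 y, bact V' y^-1%g p.2 1%g) = g2 p.
  by move=> [u v] y Hy; rewrite /g2 /=; exact: (cls_y HU HVV (u, inr v) Hy).
exists (fun A => g (crep A)); split.
  exists (fun s => match s with inl A => g1 (crep A) | inr A => g2 (crep A) end).
    move=> A; have [[u [v|v]] ->] := cls_surj A; rewrite (clift HU HVV Hg) /g /=.
      by rewrite (clift HU HV Hg1).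
    by rewrite (clift HU HV' Hg2).
  case=> A; have [[u v] ->] := cls_surj A.
    by rewrite (clift HU HV Hg1) /g1 (clift HU HVV Hg).
  by rewrite (clift HU HV' Hg2) /g2 (clift HU HVV Hg).
move=> x A z Hx Hz; have [[u [v|v]] ->] := cls_surj A;
  rewrite (bcomp_actE HU HVV) // (clift HU HVV Hg) (clift HU HVV Hg) /g /=.
  by congr inl; symmetry; exact: (bcomp_actE HU HV (u, v) Hx Hz).
by congr inr; symmetry; exact: (bcomp_actE HU HV' (u, v) Hx Hz).
Qed.
End Distrib.

End L3.
Import L3.

Module L4.

Section Assoc.
Variables (xT yT zT tT : finGroupType).
Variables (X : {group xT}) (Y : {group yT}) (Z : {group zT}) (T : {group tT}).
Variables (U : biset xT yT) (V : biset yT zT) (W : biset zT tT).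
Hypotheses (HU : is_biset X Y U) (HV : is_biset Y Z V) (HW : is_biset Z T W).

Local Notation UV := (bcomp Y U V).
Local Notation VW := (bcomp Z V W).
Let HUV : is_biset X Z UV := is_biset_bcomp HU HV.
Let HVW : is_biset Y T VW := is_biset_bcomp HV HW.

Lemma bcomp_assoc :
  biset_iso X T (bcomp Z UV W) (bcomp Y U VW).
Proof.
pose clsR (u : U) (C : VW) := bcomp_cls Y (U := U) (V := VW) (u, C).
pose clsL (B : UV) (w : W) := bcomp_cls Z (U := UV) (V := W) (B, w).
pose clsUV (u : U) (v : V) : UV := bcomp_cls Y (U := U) (V := V) (u, v).
pose clsVW (v : V) (w : W) : VW := bcomp_cls Z (U := V) (V := W) (v, w).
pose gw (w : W) (p : U * V) := clsR p.1 (clsVW p.2 w).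
have Hgw : forall w p y, y \in Y ->
    gw w (bact U 1%g p.1 y, bact V y^-1%g p.2 1%g) = gw w p.
  move=> w [u v] y Hy; rewrite /gw /=.
  have -> : clsVW (bact V y^-1 v 1) w = bact VW y^-1%g (clsVW v w) 1%g.
    by rewrite /clsVW (bcomp_actE HV HW) ?groupV ?group1 //= (bact1 HW).
  exact: (cls_y HU HVW (u, clsVW v w) Hy).
pose g (q : UV * W) := gw q.2 (crep q.1).
have Hg : forall q z, z \in Z ->
    g (bact UV 1%g q.1 z, bact W z^-1%g q.2 1%g) = g q.
  move=> [B w] z Hz; have [[u v] ->] := cls_surj B.
  rewrite /g (bcomp_actE HU HV) ?group1 // !(clift HU HV (Hgw _)) /gw /= (bact1 HU).
  by congr clsR; exact: (cls_y HV HW (v, w) Hz).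
pose hu (u : U) (q : V * W) := clsL (clsUV u q.1) q.2.
have Hhu : forall u q z, z \in Z ->
    hu u (bact V 1%g q.1 z, bact W z^-1%g q.2 1%g) = hu u q.
  move=> u [v w] z Hz; rewrite /hu /=.
  have -> : clsUV u (bact V 1 v z) = bact UV 1%g (clsUV u v) z.
    by rewrite /clsUV (bcomp_actE HU HV) ?group1 //= (bact1 HU).
  exact: (cls_y HUV HW (clsUV u v, w) Hz).
pose h (p : U * VW) := hu p.1 (crep p.2).
have Hh : forall p y, y \in Y ->
    h (bact U 1%g p.1 y, bact VW y^-1%g p.2 1%g) = h p.
  move=> [u C] y Hy; have [[v w] ->] := cls_surj C.
  rewrite /h (bcomp_actE HV HW) ?groupV ?group1 // !(clift HV HW (Hhu _)) /hu /= (bact1 HW).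
  congr clsL; rewrite /clsUV.
  exact: (cls_y HU HV (u, v) Hy).
have gE : forall u v w, g (crep (clsL (clsUV u v) w)) = clsR u (clsVW v w).
  move=> u v w; rewrite (clift HUV HW Hg) /g /= (clift HU HV (Hgw _)) //.
have hE : forall u v w, h (crep (clsR u (clsVW v w))) = clsL (clsUV u v) w.
  move=> u v w; rewrite (clift HU HVW Hh) /h /= (clift HV HW (Hhu _)) //.
exists (fun A => g (crep A)); split.
  exists (fun A => h (crep A)).
    move=> A; have [[B w] ->] := cls_surj A; have [[u v] ->] := cls_surj B.
    by rewrite gE hE.
  move=> A; have [[u C] ->] := cls_surj A; have [[v w] ->] := cls_surj C.
  by rewrite hE gE.
move=> x A t Hx Ht; have [[B w] ->] := cls_surj A; have [[u v] ->] := cls_surj B.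
rewrite (bcomp_actE HUV HW) // [X in bcomp_cls Z (X, _)](bcomp_actE HU HV) ?group1 //.
rewrite -[(u,v).1]/u -[(u,v).2]/v -[(_, w).2]/w (bact1 HV).
change (bcomp_cls Z (U := UV) (V := W) (bcomp_cls Y (U := U) (V := V) (bact U x u 1%g, v), bact W 1%g w t)) with
  (clsL (clsUV (bact U x u 1%g) v) (bact W 1%g w t)).
change (bcomp_cls Z (U := UV) (V := W) (bcomp_cls Y (U := U) (V := V) (u, v), w)) with (clsL (clsUV u v) w).
rewrite !gE /clsR (bcomp_actE HU HVW) // /clsVW.
rewrite -[(u, _).1]/u -[(u, _).2]/(bcomp_cls Z (U := V) (V := W) (v, w)).
rewrite (bcomp_actE HV HW) ?group1 //.
by rewrite -[(v, w).1]/v -[(v, w).2]/w (bact1 HV).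
Qed.
End Assoc.

End L4.
Import L4.

Module L5.
Import GRing.Theory.
Local Open Scope ring_scope.

Section ModLemmas.
Variables (k : fieldType) (W : lmodType k) (gT : finGroupType) (G : {group gT}).
Variable rho : biset gT gT -> W -> W.
Hypothesis HB : is_Bmodule G rho.

Lemma rho_lin U a u v : is_biset G G U -> rho U (a *: u + v) = a *: rho U u + rho U v.
Proof. by case: HB => H _ _ _ _ HU; apply: H. Qed.

Lemma rho_add U u v : is_biset G G U -> rho U (u + v) = rho U u + rho U v.
Proof. by move=> HU; have := rho_lin 1 u v HU; rewrite !scale1r. Qed.

Lemma rho0 U : is_biset G G U -> rho U 0 = 0.
Proof.
move=> HU; have := rho_add 0 0 HU; rewrite addr0 => H.
by apply/esym/(addrI (rho U 0)); rewrite addr0 -H.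
Qed.

Lemma rho_scale U a u : is_biset G G U -> rho U (a *: u) = a *: rho U u.
Proof. by move=> HU; have := rho_lin a u 0 HU; rewrite !addr0 (rho0 HU) addr0. Qed.

Lemma rho_sum (I : Type) U (s : seq I) (c : I -> k) (F : I -> W) :
  is_biset G G U ->
  rho U (\sum_(x <- s) c x *: F x) = \sum_(x <- s) c x *: rho U (F x).
Proof.
move=> HU; elim: s => [|x s IH]; first by rewrite !big_nil rho0.
by rewrite !big_cons rho_lin // IH.
Qed.

Lemma rho_iso U V w : is_biset G G U -> is_biset G G V -> biset_iso G G U V ->
  rho U w = rho V w.
Proof. by case: HB => _ H _ _ _ ? ? ?; apply: H. Qed.

Lemma rho_bunion U V w : is_biset G G U -> is_biset G G V ->
  rho (bunion U V) w = rho U w + rho V w.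
Proof. by case: HB => _ _ H _ _ ? ?; apply: H. Qed.

Lemma rho_comp U V w : is_biset G G U -> is_biset G G V ->
  rho (bcomp G U V) w = rho U (rho V w).
Proof. by case: HB => _ _ _ H _ ? ?; apply: H. Qed.
End ModLemmas.

Definition all_biset (gT hT : finGroupType) (G : {group gT}) (H : {group hT})
  (k : Type) (s : seq (k * biset gT hT)) : Prop :=
  foldr (fun x P => is_biset G H x.2 /\ P) True s.

Lemma all_biset_nth (gT hT : finGroupType) (G : {group gT}) (H : {group hT})
  (k : Type) (s : seq (k * biset gT hT)) d i :
  all_biset G H s -> (i < size s)%N -> is_biset G H (nth d s i).2.
Proof.
elim: s i => [|x s IH] [|i] //= [Hx Hs] Hi; first by [].
exact: IH.
Qed.

Lemma all_biset_cat (gT hT : finGroupType) (G : {group gT}) (H : {group hT})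
  (k : Type) (s t : seq (k * biset gT hT)) :
  all_biset G H s -> all_biset G H t -> all_biset G H (s ++ t).
Proof. by elim: s => [|x s IH] //= [Hx Hs] Ht; split => //; apply: IH. Qed.

Definition ebiset (gT hT : finGroupType) : biset gT hT :=
  @Biset gT hT void (fun _ v _ => v).

Lemma onto_of_seq (k : fieldType) (W : lmodType k) (gT hT : finGroupType)
  (G : {group gT}) (H : {group hT}) (f : biset gT hT -> W) :
  (forall w, exists s : seq (k * biset gT hT),
     all_biset G H s /\ w = \sum_(x <- s) x.1 *: f x.2) ->
  Bhom_onto G H f.
Proof.
move=> Hs w; have [s [Hin ->]] := Hs w.
pose d := (0 : k, ebiset gT hT).
exists (size s), (fun i => (nth d s i).1), (fun i => (nth d s i).2).
split; first by move=> i; apply: all_biset_nth.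
by rewrite (big_nth d) big_mkord.
Qed.

End L5.
Import L5.

Module L6.
Import GRing.Theory.
Local Open Scope ring_scope.

Lemma all_biset_map (gT hT : finGroupType) (G : {group gT}) (H : {group hT})
  (k : Type) (s : seq (k * biset gT hT)) (h : k * biset gT hT -> k * biset gT hT) :
  (forall x, is_biset G H x.2 -> is_biset G H (h x).2) ->
  all_biset G H s -> all_biset G H (map h s).
Proof. by move=> Hh; elim: s => [|x s IH] //= [Hx Hs]; split; [apply: Hh | apply: IH]. Qed.

Lemma part1 (k : fieldType) (W : lmodType k) (gT : finGroupType)
    (G : {group gT}) (rho : biset gT gT -> W -> W)
    (pT : finGroupType) (P : {group pT}) :
  simple_Bmodule G rho -> minimal_group G rho P -> quotient_of_Bbar G rho P.
Proof.
case=> HB _ Hsimple [[U0 [V0 [w0 [HU0 HV0 Hnz]]]] Hmin].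
pose f (U : biset gT pT) := rho (bcomp P U V0) w0.
have HC : forall U, is_biset G P U -> is_biset G G (bcomp P U V0).
  by move=> U HU; apply: is_biset_bcomp.
have fcomp : forall U V, is_biset G G U -> is_biset G P V ->
    f (bcomp G U V) = rho U (f V).
  move=> U V HU HV; rewrite /f -(rho_comp HB) //; last exact: HC.
  apply: (rho_iso HB); [apply: HC; exact: is_biset_bcomp|
     apply: is_biset_bcomp => //; exact: HC|].
  exact: bcomp_assoc.
exists f; split.
- split.
  + move=> U U' HU HU' I; apply: (rho_iso HB); [exact: HC | exact: HC |].
    by apply: bcomp_iso => //; apply: biset_iso_refl.
  + move=> U U' HU HU'; rewrite /f -(rho_bunion HB); try exact: HC.
    apply: (rho_iso HB); [apply: HC; exact: is_biset_bunion| |].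
      by apply: is_biset_bunion; apply: HC.
    exact: bcomp_bunionL.
  + exact: fcomp.
- move=> kT K [_ Hlt] U V HU HV.
  have -> : f (bcomp K U V) = rho (bcomp K U (bcomp P V V0)) w0.
    apply: (rho_iso HB); [apply: HC; exact: is_biset_bcomp| |].
      by apply: is_biset_bcomp => //; exact: is_biset_bcomp.
    exact: bcomp_assoc.
  case: (eqVneq (rho (bcomp K U (bcomp P V V0)) w0) 0) => // Hne; exfalso; apply: (Hmin _ _ Hlt).
  exists U, (bcomp P V V0), w0; split => //; exact: is_biset_bcomp.
- apply: onto_of_seq.
  pose S (w : W) := exists s : seq (k * biset gT pT),
     all_biset G P s /\ w = \sum_(x <- s) x.1 *: f x.2.
  have HS : is_submodule G rho S.
    split.
    + by exists [::]; rewrite big_nil.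
    + move=> u v [s [Hs ->]] [t [Ht ->]]; exists (s ++ t); split.
        exact: all_biset_cat.
      by rewrite big_cat.
    + move=> a u [s [Hs ->]]; exists (map (fun x => (a * x.1, x.2)) s); split.
        by apply: all_biset_map.
      rewrite big_map scaler_sumr; apply: eq_bigr => x _; by rewrite scalerA.
    + move=> U u HU [s [Hs ->]]; exists (map (fun x => (x.1, bcomp G U x.2)) s); split.
        by apply: (all_biset_map _ Hs) => x Hx; exact: is_biset_bcomp.
      elim: s Hs => [|x s IH] /= => [_|[Hx Hs]]; first by rewrite !big_nil (rho0 HB).
      by rewrite !big_cons (rho_lin HB) // IH // fcomp.
  have [Hall|H0] := Hsimple S HS; first exact: Hall.
  exfalso; move/negP: Hnz; apply; apply/eqP.
  have := H0 (f U0); rewrite /f => ->; first by [].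
  by exists [:: (1, U0)]; split; [split | rewrite big_cons big_nil addr0 scale1r].
Qed.

End L6.
Import L6.

Module L7.

Section Sub.
Variables (xT yT : finGroupType) (X : {group xT}) (T : {group yT}).
Variables (Y : biset xT yT) (HY : is_biset X T Y).

Definition subb (S : {set Y}) : biset xT yT :=
  @Biset xT yT {y : Y | y \in S} (fun x s t => insubd s (bact Y x (val s) t)).

Definition bclosed (S : {set Y}) := forall x y t, x \in X -> t \in T -> y \in S ->
  bact Y x y t \in S.

Lemma subb_val S x s t : bclosed S -> x \in X -> t \in T ->
  val (bact (subb S) x s t) = bact Y x (val s) t.
Proof. move=> HS Hx Ht /=; rewrite insubdK //; apply: HS => //; exact: valP. Qed.

Lemma is_biset_subb S : bclosed S -> is_biset X T (subb S).
Proof.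
move=> HS; split.
  by move=> s; apply: val_inj; rewrite subb_val ?group1 // (bact1 HY).
move=> x1 x2 y1 y2 s H1 H2 H3 H4; apply: val_inj.
by rewrite !subb_val ?groupM // (bactM HY).
Qed.

Lemma card_subb S : #|subb S| = #|S|.
Proof. by rewrite /= card_sig; apply: eq_card => y. Qed.

Lemma bclosedC S : bclosed S -> bclosed (~: S).
Proof.
move=> HS x y t Hx Ht; rewrite !inE; apply: contra => H.
have := HS x^-1%g (bact Y x y t) t^-1%g; rewrite groupV => /(_ Hx).
rewrite groupV => /(_ Ht H); rewrite (bactM HY) ?groupV //.
by rewrite mulVg mulgV (bact1 HY).
Qed.

Lemma split_iso S : bclosed S ->
  biset_iso X T Y (bunion (subb S) (subb (~: S))).
Proof.
move=> HS; apply: biset_iso_sym.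
pose g (s : bunion (subb S) (subb (~: S))) : Y :=
  match s with inl a => val a | inr b => val b end.
exists g; split.
  apply: inj_card_bij.
    move=> [a|b] [a'|b'] /= E.
    - by congr inl; apply: val_inj.
    - by move: (valP a) (valP b'); rewrite /= E inE => ->.
    - by move: (valP b) (valP a'); rewrite /= E inE => /negbTE ->.
    - by congr inr; apply: val_inj.
  rewrite card_sum !card_subb cardsC //.
move=> x [a|b] t Hx Ht /=; rewrite insubdK //; first by apply: HS => //; exact: valP.
by apply: bclosedC => //; exact: valP.
Qed.

Lemma empty_iso : #|Y| = 0%N -> biset_iso X T Y (bunion Y Y).
Proof.
move=> H0; have F : Y -> False by move=> y; move: H0; rewrite (cardD1 y) inE.
exists inl; split => //.
exists (fun s => match s with inl y => y | inr y => y end) => //.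
by case=> y //; case: (F y).
Qed.
End Sub.

End L7.
Import L7.

Module L8.
Local Open Scope group_scope.

Section Trans.
Variables (pT hT : finGroupType) (P : {group pT}) (H : {group hT}).
Variables (Y : biset pT hT) (HY : is_biset P H Y) (y0 : Y).

Definition NF p h := bact Y p y0 h.

Lemma NF_act q p h k : q \in P -> p \in P -> h \in H -> k \in H ->
  bact Y q (NF p h) k = NF (q * p) (h * k).
Proof. by move=> *; rewrite /NF (bactM HY). Qed.

Lemma NF_cong p h p' h' q k : p \in P -> h \in H -> p' \in P -> h' \in H ->
  q \in P -> k \in H -> NF p h = NF p' h' -> NF (q * p) (h * k) = NF (q * p') (h' * k).
Proof. by move=> ? ? ? ? ? ? E; rewrite -!NF_act // E. Qed.

Lemma NF_r p h : p \in P -> h \in H -> NF p h = bact Y 1 (NF p 1) h.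
Proof. by move=> *; rewrite NF_act ?group1 // mul1g mul1g. Qed.

Lemma NF_l p h : p \in P -> h \in H -> NF p h = bact Y p (NF 1 h) 1.
Proof. by move=> *; rewrite NF_act ?group1 // mulg1 mulg1. Qed.

Definition S2 := [set h in H | [exists p in P, NF p 1 == NF 1 h]].
Definition T2 := [set h in H | NF 1 h == NF 1 1].

Lemma S2P h : reflect (h \in H /\ exists2 p, p \in P & NF p 1 = NF 1 h) (h \in S2).
Proof.
rewrite inE; apply: (iffP andP) => [[Hh /existsP [p /andP [Hp /eqP E]]]|[Hh [p Hp E]]].
  by split => //; exists p.
by split => //; apply/existsP; exists p; rewrite Hp E eqxx.
Qed.

Lemma T2P h : reflect (h \in H /\ NF 1 h = NF 1 1) (h \in T2).
Proof. by rewrite inE; apply: (iffP andP) => [[? /eqP]|[? ->]]. Qed.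

Lemma S2_group : group_set S2.
Proof.
apply/group_setP; split.
  by apply/S2P; split; [exact: group1 | exists 1].
move=> h1 h2 /S2P [H1 [p1 P1 E1]] /S2P [H2 [p2 P2 E2]]; apply/S2P.
split; first exact: groupM.
exists (p1 * p2); first exact: groupM.
have := NF_cong (group1 _) H2 P2 (group1 _) P1 (group1 _) (esym E2).
rewrite !mulg1 => <-.
have := NF_cong P1 (group1 _) (group1 _) H1 (group1 _) H2 E1.
by rewrite !mul1g => ->.
Qed.

Lemma T2_group : group_set T2.
Proof.
apply/group_setP; split; first by apply/T2P; split; [exact: group1|].
move=> h1 h2 /T2P [H1 E1] /T2P [H2 E2]; apply/T2P.
split; first exact: groupM.
have := NF_cong (group1 _) H1 (group1 _) (group1 _) (group1 _) H2 E1.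
by rewrite !mul1g => ->.
Qed.

Canonical S2g := Group S2_group.
Canonical T2g := Group T2_group.

Lemma T2_sub : T2 \subset S2.
Proof.
apply/subsetP => t /T2P [Ht E]; apply/S2P; split => //; exists 1 => //.
Qed.

Lemma T2_inv p h t : p \in P -> h \in H -> t \in T2 -> NF p (t * h) = NF p h.
Proof.
move=> Hp Hh /T2P [Ht E].
have := NF_cong (group1 _) Ht (group1 _) (group1 _) Hp Hh E.
by rewrite !mulg1 mul1g.
Qed.

Lemma S2_norm : S2 \subset 'N(T2).
Proof.
apply/subsetP => h /S2P [Hh [p Hp E]]; rewrite inE; apply/subsetP => x.
case/imsetP => t Ht ->; apply/T2P; have Ht' : t \in H.
  by move: Ht => /T2P [].
split; first by rewrite groupJ.
have E1 : NF 1 h^-1 = NF p^-1 1.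
  have := NF_cong Hp (group1 _) (group1 _) Hh (groupVr Hp) (groupVr Hh) E.
  by rewrite mulVg mulgV mul1g mulg1.
rewrite /conjg.
have := NF_cong (group1 _) (groupVr Hh) (groupVr Hp) (group1 _) (group1 _) (groupM Ht' Hh) E1.
rewrite !mul1g => ->.
rewrite T2_inv ?groupVr //.
have := NF_cong Hp (group1 _) (group1 _) Hh (groupVr Hp) (group1 _) E.
by rewrite mulVg !mulg1 ?mul1g => <-.
Qed.

Lemma T2_normal : T2 <| S2.
Proof. by rewrite /normal T2_sub S2_norm. Qed.

Local Notation kT := (coset_of T2g).
Definition Kq := (S2g / T2g)%G.
Local Notation K := Kq.

Lemma S2_sub : S2 \subset H.
Proof. by apply/subsetP => h /S2P []. Qed.

Lemma S2H h : h \in S2 -> h \in H.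
Proof. by move/S2P => []. Qed.

Lemma K_repr kk : kk \in K -> repr kk \in S2.
Proof.
case/morphimP => z Nz Sz ->; have := mem_repr_coset (coset T2g z).
rewrite val_coset // => /rcosetP [t Ht ->]; apply: groupM => //.
exact: (subsetP T2_sub).
Qed.

Lemma repr_coset_NF p h r : p \in P -> h \in H -> r \in S2 ->
  NF p (repr (coset T2g r) * h) = NF p (r * h).
Proof.
move=> Hp Hh Hr; have Nr : r \in 'N(T2g) := subsetP S2_norm r Hr.
have := mem_repr_coset (coset T2g r); rewrite val_coset // => /rcosetP [t Ht ->].
by rewrite -mulgA (T2_inv (t:=t)) // groupM // S2H.
Qed.

Lemma repr_mul p h k1 k2 : p \in P -> h \in H -> k1 \in K -> k2 \in K ->
  NF p (repr (k1 * k2) * h) = NF p (repr k1 * repr k2 * h).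
Proof.
move=> Hp Hh K1 K2.
have -> : k1 * k2 = coset T2g (repr k1 * repr k2).
  by rewrite morphM ?repr_coset_norm // /= !coset_reprK.
by rewrite repr_coset_NF // groupM // K_repr.
Qed.

Lemma repr_inv p h r : p \in P -> h \in H -> r \in S2 ->
  NF p (repr (coset T2g r)^-1 * h) = NF p (r^-1 * h).
Proof.
move=> Hp Hh Hr; have Nr : r \in 'N(T2g) := subsetP S2_norm r Hr.
by rewrite -morphV // repr_coset_NF // groupV.
Qed.

Definition pS2 r := odflt 1 [pick p in P | NF p 1 == NF 1 r].

Lemma pS2P r : r \in S2 -> pS2 r \in P /\ NF (pS2 r) 1 = NF 1 r.
Proof.
move=> /S2P [Hr [p Hp E]]; rewrite /pS2; case: pickP => [q /andP [Hq /eqP Eq]|H0] //=.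
by have := H0 p; rewrite Hp E eqxx.
Qed.

Definition O1 := [set y : Y | [exists p in P, y == NF p 1]].
Definition O2 := [set y : Y | [exists h in H, y == NF 1 h]].

Lemma O1P y : reflect (exists2 p, p \in P & y = NF p 1) (y \in O1).
Proof.
rewrite inE; apply: (iffP existsP) => [[p /andP [Hp /eqP E]]|[p Hp E]].
  by exists p.
by exists p; rewrite Hp E eqxx.
Qed.

Lemma O2P y : reflect (exists2 h, h \in H & y = NF 1 h) (y \in O2).
Proof.
rewrite inE; apply: (iffP existsP) => [[h /andP [Hh /eqP E]]|[h Hh E]].
  by exists h.
by exists h; rewrite Hh E eqxx.
Qed.

Definition Ab : biset pT kT :=
  @Biset pT kT {y : Y | y \in O1} (fun p a kk => insubd a (bact Y p (val a) (repr kk))).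
Definition Bb : biset kT hT :=
  @Biset kT hT {y : Y | y \in O2} (fun kk b h => insubd b (bact Y (pS2 (repr kk)) (val b) h)).

Lemma Aval (a : Ab) : exists2 q, q \in P & val a = NF q 1.
Proof. by apply/O1P; exact: (valP a). Qed.

Lemma Bval (b : Bb) : exists2 h, h \in H & val b = NF 1 h.
Proof. by apply/O2P; exact: (valP b). Qed.

Lemma A_act p (a : Ab) kk : p \in P -> kk \in K ->
  val (bact Ab p a kk) = bact Y p (val a) (repr kk).
Proof.
move=> Hp Hk /=; rewrite insubdK //.
have [q Hq ->] := Aval a; have Hr := K_repr Hk; have [Pr Er] := pS2P Hr.
apply/O1P; exists (p * q * pS2 (repr kk)); first by rewrite !groupM.
rewrite NF_act ?S2H // mul1g.
have := NF_cong Pr (group1 _) (group1 _) (S2H Hr) (groupM Hp Hq) (group1 _) Er.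
by rewrite !mulg1 => ->.
Qed.

Lemma Bcomp kk (b : Bb) h h' : kk \in K -> h \in H -> h' \in H -> val b = NF 1 h' ->
  bact Y (pS2 (repr kk)) (val b) h = NF 1 (repr kk * (h' * h)).
Proof.
move=> Hk Hh Hh' ->; have Hr := K_repr Hk; have [Pr Er] := pS2P Hr.
rewrite NF_act // mulg1.
have := NF_cong Pr (group1 _) (group1 _) (S2H Hr) (group1 _) (groupM Hh' Hh) Er.
by rewrite !mul1g.
Qed.

Lemma B_act kk (b : Bb) h h' : kk \in K -> h \in H -> h' \in H -> val b = NF 1 h' ->
  val (bact Bb kk b h) = NF 1 (repr kk * (h' * h)).
Proof.
move=> Hk Hh Hh' E /=; rewrite insubdK; first exact: Bcomp.
rewrite /= (Bcomp Hk Hh Hh' E); apply/O2P; exists (repr kk * (h' * h)) => //.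
by rewrite !groupM // S2H // K_repr.
Qed.

Lemma is_biset_A : is_biset P K Ab.
Proof.
split.
  by move=> a; apply: val_inj; rewrite A_act ?group1 // repr_coset1 (bact1 HY).
move=> x1 x2 k1 k2 a X1 X2 K1 K2; apply: val_inj.
have K21 : k2 * k1 \in K by rewrite groupM.
have X12 : x1 * x2 \in P by rewrite groupM.
have R1 := S2H (K_repr K1); have R2 := S2H (K_repr K2); have R21 := S2H (K_repr K21).
rewrite !A_act // (bactM HY) //.
have [q Hq ->] := Aval a.
rewrite !NF_act ?groupM // ?mul1g.
by rewrite -[repr (k2 * k1)]mulg1 repr_mul ?groupM // mulg1.
Qed.

Lemma is_biset_B : is_biset K H Bb.
Proof.
split.
  move=> b; apply: val_inj; have [h' Hh' E] := Bval b.
  by rewrite (B_act _ _ _ E) ?group1 // repr_coset1 mul1g mulg1.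
move=> k1 k2 h1 h2 b K1 K2 H1 H2; apply: val_inj.
have [h' Hh' E] := Bval b.
have E2 := B_act K2 H2 Hh' E.
have R1 := S2H (K_repr K1); have R2 := S2H (K_repr K2).
rewrite (B_act K1 H1 (groupM R2 (groupM Hh' H2)) E2).
rewrite (B_act (groupM K1 K2) (groupM H2 H1) Hh' E) repr_mul ?groupM //.
by rewrite !mulgA.
Qed.

Definition pO1 (a : Ab) := odflt 1 [pick p in P | NF p 1 == val a].

Lemma pO1P a : pO1 a \in P /\ NF (pO1 a) 1 = val a.
Proof.
have [q Hq E] := Aval a; rewrite /pO1; case: pickP => [p /andP [Hp /eqP Ep]|H0] //=.
by have := H0 q; rewrite Hq E eqxx.
Qed.

Definition mm (q : Ab * Bb) : Y := bact Y (pO1 q.1) (val q.2) 1.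

Lemma mE a b p r h : p \in P -> r \in H -> h \in H -> val a = NF p r -> val b = NF 1 h ->
  mm (a, b) = NF p (r * h).
Proof.
move=> Hp Hr Hh Ea Eb; rewrite /mm /= Eb; have [Pa Ea'] := pO1P a.
rewrite -NF_l // NF_r // Ea' Ea NF_act ?group1 //.
by rewrite mul1g.
Qed.


Lemma mm_inv q kk : kk \in K ->
  mm (bact Ab 1 q.1 kk, bact Bb kk^-1 q.2 1) = mm q.
Proof.
case: q => a b Hk /=; have [p Hp Ea] := Aval a; have [h Hh Eb] := Bval b.
have Rk := S2H (K_repr Hk); have Rk' := S2H (K_repr (groupVr Hk)).
have Ea' : val (bact Ab 1 a kk) = NF p (repr kk).
  by rewrite A_act ?group1 // Ea NF_act ?group1 // !mul1g.
have Eb' := B_act (groupVr Hk) (group1 _) Hh Eb.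
rewrite (mE Hp Rk (groupM Rk' (groupM Hh (group1 _))) Ea' Eb') //.
rewrite (mE Hp (group1 _) Hh Ea Eb) mulgA -repr_mul ?groupV //.
  by rewrite mulgV repr_coset1 mulg1.
by rewrite mulg1.
Qed.

Definition Mmap (A : bcomp K Ab Bb) : Y := mm (crep A).

Lemma Mcls q : Mmap (bcomp_cls K q) = mm q.
Proof. by apply: (clift is_biset_A is_biset_B) => p y Hy; apply: mm_inv. Qed.

Lemma Mmap_act x A z : x \in P -> z \in H ->
  Mmap (bact (bcomp K Ab Bb) x A z) = bact Y x (Mmap A) z.
Proof.
move=> Hx Hz; have [[a b] ->] := cls_surj A.
have [p Hp Ea] := Aval a; have [h Hh Eb] := Bval b.
rewrite (bcomp_actE is_biset_A is_biset_B) // !Mcls.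
have Ea' : val (bact Ab x a 1) = NF (x * p) 1.
  by rewrite A_act ?group1 // repr_coset1 Ea NF_act ?group1 // mulg1.
have Eb' := B_act (group1 _) Hz Hh Eb; rewrite repr_coset1 mul1g in Eb'.
rewrite (mE (groupM Hx Hp) (group1 _) (groupM Hh Hz) Ea' Eb') /=.
by rewrite (mE Hp (group1 _) Hh Ea Eb) NF_act ?group1 // !mul1g.
Qed.

Lemma O1_11 : NF 1 1 \in O1.
Proof. by apply/O1P; exists 1. Qed.
Lemma O2_11 : NF 1 1 \in O2.
Proof. by apply/O2P; exists 1. Qed.

Definition a0 : Ab := Sub (NF 1 1) O1_11.
Definition b0 : Bb := Sub (NF 1 1) O2_11.
Definition aOf p : Ab := insubd a0 (NF p 1).
Definition bOf h : Bb := insubd b0 (NF 1 h).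

Lemma val_aOf p : p \in P -> val (aOf p) = NF p 1.
Proof. by move=> Hp; rewrite /aOf insubdK //=; apply/O1P; exists p. Qed.
Lemma val_bOf h : h \in H -> val (bOf h) = NF 1 h.
Proof. by move=> Hh; rewrite /bOf insubdK //=; apply/O2P; exists h. Qed.

Local Notation clsK := (@bcomp_cls _ _ _ K Ab Bb).

Lemma cls_wd p h p' h' : p \in P -> h \in H -> p' \in P -> h' \in H ->
  NF p h = NF p' h' -> clsK (aOf p, bOf h) = clsK (aOf p', bOf h').
Proof.
move=> Hp Hh Hp' Hh' E.
have Hr : h * h'^-1 \in S2.
  apply/S2P; split; first by rewrite groupM ?groupV.
  exists (p^-1 * p'); first by rewrite groupM ?groupV.
  have := NF_cong Hp' Hh' Hp Hh (groupVr Hp) (groupVr Hh') (esym E).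
  by rewrite mulVg mulgV.
set r := h * h'^-1 in Hr.
have Kk : coset T2g r \in K by apply: mem_quotient.
rewrite -(cls_y is_biset_A is_biset_B (aOf p, bOf h) Kk) /=.
congr clsK; congr pair; apply: val_inj.
  rewrite A_act ?group1 // val_aOf // val_aOf // NF_act ?group1 ?S2H ?K_repr //.
  have := repr_coset_NF Hp (group1 _) Hr; rewrite !mulg1 => E1.
  rewrite (mul1g (repr _)) mul1g E1 /r.
  have := NF_cong Hp Hh Hp' Hh' (group1 _) (groupVr Hh') E.
  by rewrite !mul1g mulgV.
rewrite (B_act (groupVr Kk) (group1 _) Hh (val_bOf Hh)) val_bOf //.
rewrite (repr_inv (group1 _) (groupM Hh (group1 _)) Hr) /r invMg invgK mulg1 -mulgA mulVg mulg1.
done.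
Qed.

Hypothesis Htr : forall y : Y, exists p h, [/\ p \in P, h \in H & y = NF p h].

Definition Nmap (y : Y) : bcomp K Ab Bb :=
  match [pick ph : pT * hT | (ph.1 \in P) && (ph.2 \in H) && (y == NF ph.1 ph.2)] with
  | Some ph => clsK (aOf ph.1, bOf ph.2)
  | None => clsK (a0, b0) end.

Lemma NmapE p h : p \in P -> h \in H -> Nmap (NF p h) = clsK (aOf p, bOf h).
Proof.
move=> Hp Hh; rewrite /Nmap; case: pickP => [[p' h'] /= /andP [/andP [Hp' Hh'] /eqP E]|H0].
  by apply: cls_wd.
by have := H0 (p, h); rewrite /= Hp Hh eqxx.
Qed.

Lemma Y_iso : biset_iso P H Y (bcomp K Ab Bb).
Proof.
apply: biset_iso_sym; exists Mmap; split; last first.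
  by move=> x A z Hx Hz; apply: Mmap_act.
exists Nmap.
  move=> A; have [[a b] ->] := cls_surj A.
  have [p Hp Ea] := Aval a; have [h Hh Eb] := Bval b.
  rewrite Mcls (mE Hp (group1 _) Hh Ea Eb) mul1g NmapE //.
  by congr clsK; congr pair; apply: val_inj; rewrite ?val_aOf ?val_bOf.
move=> y; have [p [h [Hp Hh ->]]] := Htr y.
rewrite NmapE // Mcls (mE Hp (group1 _) Hh (val_aOf Hp) (val_bOf Hh)).
by rewrite mul1g.
Qed.
End Trans.

End L8.
Import L8.

From mathcomp Require Import zify.
Module L9.
Local Open Scope group_scope.

Section Goursat.
Variables (pT hT : finGroupType) (P : {group pT}) (H : {group hT}).
Variables (Y : biset pT hT) (HY : is_biset P H Y) (y0 : Y).

Local Notation NF := (NF y0).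
Local Notation NF_cong := (NF_cong HY).

Hypothesis Hbig : ~~ (#|Kq HY y0| < #|H|)%N.

Lemma S2_eq : S2 P H y0 = H /\ forall t, t \in T2 H y0 -> t = 1.
Proof.
have Ec := card_quotient (H := T2g HY y0) (A := S2 P H y0) (S2_norm HY y0).
have La := Lagrange (G := S2g HY y0) (H := T2g HY y0) (T2_sub P H y0).
have Sle := subset_leq_card (S2_sub P H y0).
have T0 := cardG_gt0 (T2g HY y0); have S0 := cardG_gt0 (S2g HY y0).
move: Hbig; rewrite /Kq /= Ec -leqNgt => Hle.
move: La Sle T0 S0; rewrite /= => La Sle T0 S0.
have Hle2 : (#|H| <= #|S2 P H y0 : T2 H y0|)%N := Hle.
have key : forall t i s h : nat, (t * i)%N = s -> (h <= i)%N -> (s <= h)%N ->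
    (0 < t)%N -> (0 < s)%N -> t = 1%N /\ s = h.
  by move=> t i s h ? ? ? ? ?; split; nia.
have [E1 E2] := key _ _ _ _ La Hle2 Sle T0 S0.
split.
  by apply/eqP; rewrite eqEcard (S2_sub P H y0) /=; move: E2 => ->.
move=> t Ht; have := card_le1_trivg (G := T2g HY y0); rewrite /= E1 => /(_ isT) E.
by move: Ht; rewrite E => /set1P.
Qed.

Lemma NF_uniq h h' : h \in H -> h' \in H -> NF 1 h = NF 1 h' -> h = h'.
Proof.
move=> Hh Hh' E; apply/eqP; rewrite eq_mulgV1; apply/eqP; apply: S2_eq.2.
apply/(T2P H y0); split; first by rewrite groupM ?groupV.
have := NF_cong (group1 _) Hh (group1 _) Hh' (group1 _) (groupVr Hh') E.
by rewrite !mulg1 mulgV.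
Qed.

Definition S1 := [set p in P | [exists h in H, NF p 1 == NF 1 h]].

Lemma S1P p : reflect (p \in P /\ exists2 h, h \in H & NF p 1 = NF 1 h) (p \in S1).
Proof.
rewrite inE; apply: (iffP andP) => [[Hp /existsP [h /andP [Hh /eqP E]]]|[Hp [h Hh E]]].
  by split => //; exists h.
by split => //; apply/existsP; exists h; rewrite Hh E eqxx.
Qed.

Lemma S1_mul p q hp hq : p \in P -> q \in P -> hp \in H -> hq \in H ->
  NF p 1 = NF 1 hp -> NF q 1 = NF 1 hq -> NF (p * q) 1 = NF 1 (hp * hq).
Proof.
move=> Hp Hq Hhp Hhq Ep Eq.
have := NF_cong Hq (group1 _) (group1 _) Hhq Hp (group1 _) Eq.
rewrite !mulg1 => ->.
have := NF_cong Hp (group1 _) (group1 _) Hhp (group1 _) Hhq Ep.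
by rewrite !mul1g.
Qed.

Lemma S1_group : group_set S1.
Proof.
apply/group_setP; split; first by apply/S1P; split => //; exists 1.
move=> p q /S1P [Hp [hp Hhp Ep]] /S1P [Hq [hq Hhq Eq]]; apply/S1P.
split; first exact: groupM.
by exists (hp * hq); [exact: groupM | exact: S1_mul].
Qed.

Canonical S1g := Group S1_group.

Definition phi p := odflt 1 [pick h in H | NF p 1 == NF 1 h].

Lemma phiP p : p \in S1 -> phi p \in H /\ NF p 1 = NF 1 (phi p).
Proof.
move=> /S1P [Hp [h Hh E]]; rewrite /phi; case: pickP => [h' /andP [Hh' /eqP E']|H0] //=.
by have := H0 h; rewrite Hh E eqxx.
Qed.

Lemma phiM : {in S1g &, {morph phi : x y / x * y}}.
Proof.
move=> p q Sp Sq; have [Hp Ep] := phiP Sp; have [Hq Eq] := phiP Sq.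
have Spq : p * q \in S1 by rewrite groupM.
have [Hpq Epq] := phiP Spq.
apply: NF_uniq => //; first exact: groupM.
rewrite -Epq; apply: S1_mul => //.
  by move: Sp => /S1P [].
by move: Sq => /S1P [].
Qed.

Definition phim := Morphism phiM.

Lemma phim_im : phim @* S1g = H.
Proof.
apply/eqP; rewrite eqEsubset; apply/andP; split.
  apply/subsetP => h; rewrite morphimEdom => /imsetP [p Sp ->].
  by have [] := phiP Sp.
apply/subsetP => h Hh; have := Hh; rewrite -S2_eq.1 => /(S2P P H y0) [_ [p Hp E]].
have Sp : p \in S1 by apply/S1P; split => //; exists h.
have [Hph Eph] := phiP Sp.
have -> : h = phim p by apply: NF_uniq => //; rewrite -E Eph.
exact: mem_morphim.
Qed.

Lemma goursat : subquotient H P.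
Proof.
exists S1g, ('ker phim)%G; split.
- by apply/subsetP => p /S1P [].
- exact: ker_normal.
- by rewrite isog_sym /= -{1}phim_im first_isog.
Qed.
End Goursat.

End L9.
Import L9.

Module L10.
Import GRing.Theory.
Local Open Scope ring_scope.

Section Decomp.
Variables (k : fieldType) (W : lmodType k) (gT : finGroupType) (G : {group gT}).
Variable rho : biset gT gT -> W -> W.
Variables (pT hT : finGroupType) (P : {group pT}) (H : {group hT}).
Variable f : biset gT hT -> W.
Hypotheses (Hf : is_Bhom G rho H f) (Hk : kills_I G H f).
Variables (U : biset gT pT) (HU : is_biset G P U).

Lemma f_iso A B : is_biset G H A -> is_biset G H B -> biset_iso G H A B -> f A = f B.
Proof. by case: Hf => Hi _ _; apply: Hi. Qed.

Lemma f_bunion A B : is_biset G H A -> is_biset G H B -> f (bunion A B) = f A + f B.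
Proof. by case: Hf => _ Ha _; apply: Ha. Qed.

Lemma f_empty (Y : biset pT hT) : #|Y| = 0%N -> is_biset P H Y -> f (bcomp P U Y) = 0.
Proof.
move=> Y0 HY; set E := bcomp P U Y.
have HE : is_biset G H E by exact: is_biset_bcomp.
have E0 : #|E| = 0%N.
  apply/eqP; rewrite cardE size_eq0; apply/eqP.
  case Ee : (enum E) => [|A s] //; exfalso.
  by move: Y0; rewrite (cardD1 (crep A).2) inE.
have := f_bunion HE HE; rewrite -(f_iso HE (is_biset_bunion HE HE) (empty_iso G H E0)).
by move=> Ef; apply/esym/(addrI (f E)); rewrite addr0 -Ef.
Qed.

Lemma decomp n (Y : biset pT hT) : (#|Y| <= n)%N -> is_biset P H Y ->
  subquotient H P \/ f (bcomp P U Y) = 0.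
Proof.
elim: n Y => [|n IH] Y Hn HY.
  by right; apply: f_empty => //; apply/eqP; rewrite -leqn0.
case: (posnP #|Y|) => [Y0|Ypos]; first by right; apply: f_empty.
have [y0 _] := card_gt0P Ypos.
pose O := [set y : Y | [exists p in P, [exists h in H, y == NF y0 p h]]].
have OP : forall y, reflect (exists p h, [/\ p \in P, h \in H & y = NF y0 p h]) (y \in O).
  move=> y; rewrite inE; apply: (iffP existsP).
    by move=> [p /andP [Hp /existsP [h /andP [Hh /eqP E]]]]; exists p, h.
  move=> [p [h [Hp Hh E]]]; exists p; rewrite Hp; apply/existsP; exists h.
  by rewrite Hh E eqxx.
have HO : bclosed P H O.
  move=> x y t Hx Ht /OP [p [h [Hp Hh ->]]]; apply/OP.
  by exists (x * p)%g, (h * t)%g; rewrite (NF_act HY) ?groupM.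
have HUY : is_biset G H (bcomp P U Y) by exact: is_biset_bcomp.
case: (boolP [forall y, y \in O]) => [/forallP Hall | Hnot].
  have Htr : forall y : Y, exists p h, [/\ p \in P, h \in H & y = NF y0 p h].
    by move=> y; apply/OP.
  have YI := Y_iso HY Htr.
  have HA := is_biset_A HY y0; have HB := is_biset_B HY y0.
  have HUA := is_biset_bcomp HU HA.
  have HAB := is_biset_bcomp HA HB.
  have -> : f (bcomp P U Y) = f (bcomp (Kq HY y0) (bcomp P U (Ab HY y0)) (Bb HY y0)).
    rewrite (f_iso HUY (is_biset_bcomp HU HAB)
       (bcomp_iso HU HY HU HAB (biset_iso_refl _ _ U) YI)).
    apply: f_iso; [exact: is_biset_bcomp | exact: is_biset_bcomp |].
    exact: biset_iso_sym (bcomp_assoc HU HA HB).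
  case: (ltnP #|Kq HY y0| #|H|) => Hlt.
    right; apply: Hk => //; split => //.
    exists (S2g HY y0), (T2g HY y0); split.
    - exact: S2_sub.
    - exact: T2_normal.
    - exact: isog_refl.
  by left; apply: (goursat (HY := HY) (y0 := y0)); rewrite -leqNgt.
move: Hnot; rewrite negb_forall => /existsP [y Hy].
have I := split_iso HY HO.
have HS1 := is_biset_subb HY HO; have HS2 := is_biset_subb HY (bclosedC HY HO).
have Ey0 : y0 \in O by apply/OP; exists 1%g, 1%g; rewrite /NF (bact1 HY).
have Cs := cardsC O.
have C1 : (#|subb O| <= n)%N.
  rewrite card_subb -ltnS; apply: leq_trans Hn; rewrite -Cs -addn1 leq_add2l.
  by apply/card_gt0P; exists y; rewrite inE.
have C2 : (#|subb (~: O)| <= n)%N.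
  rewrite card_subb -ltnS; apply: leq_trans Hn; rewrite -Cs -add1n leq_add2r.
  by apply/card_gt0P; exists y0.
have HS12 := is_biset_bunion HS1 HS2.
rewrite (f_iso HUY (is_biset_bcomp HU HS12)
       (bcomp_iso HU HY HU HS12 (biset_iso_refl _ _ U) I)).
rewrite (f_iso (is_biset_bcomp HU HS12)
   (is_biset_bunion (is_biset_bcomp HU HS1) (is_biset_bcomp HU HS2))
   (bcomp_bunionR HU HS1 HS2)).
rewrite f_bunion; try exact: is_biset_bcomp.
case: (IH _ C1 HS1) => [|->]; first by left.
case: (IH _ C2 HS2) => [|->]; first by left.
by right; rewrite addr0.
Qed.
End Decomp.

End L10.
Import L10.

Module L11.
Import GRing.Theory.
Local Open Scope ring_scope.

Lemma part2 (k : fieldType) (W : lmodType k) (gT : finGroupType)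
    (G : {group gT}) (rho : biset gT gT -> W -> W)
    (pT : finGroupType) (P : {group pT}) :
  simple_Bmodule G rho -> minimal_group G rho P ->
  forall (hT : finGroupType) (H : {group hT}),
     quotient_of_Bbar G rho H -> subquotient H P.
Proof.
case=> HB _ _ [[U0 [V0 [w0 [HU0 HV0 Hnz]]]] _] hT H [f [Hf Hk Hon]].
have [n [c [X [HX Ew]]]] := Hon w0.
set UV := bcomp P U0 V0.
have HUV : is_biset G G UV by exact: is_biset_bcomp.
have E : rho UV w0 = \sum_(i < n) c i *: f (bcomp G UV (X i)).
  rewrite Ew (rho_sum HB) //; apply: eq_bigr => i _; congr (_ *: _).
  by case: Hf => _ _ Hc; rewrite Hc.
have Fi : forall i, subquotient H P \/ f (bcomp G UV (X i)) = 0.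
  move=> i; have HVX := is_biset_bcomp HV0 (HX i).
  case: (decomp Hf Hk HU0 (leqnn _) HVX) => [|E0]; [by left | right].
  rewrite -E0; apply: (f_iso Hf).
  - exact: is_biset_bcomp.
  - exact: is_biset_bcomp.
  - exact: bcomp_assoc.
case: (boolP [exists i : 'I_n, f (bcomp G UV (X i)) != 0]) => [/existsP [i Hi]|Hn].
  by case: (Fi i) => // E0; rewrite E0 eqxx in Hi.
exfalso; move/negP: Hnz; apply; apply/eqP; rewrite E big1 // => i _.
move: Hn; rewrite negb_exists => /forallP /(_ i); rewrite negbK => /eqP ->.
by rewrite scaler0.
Qed.


End L11.
Import L11.

Theorem proposition5p2 (k : fieldType) (W : lmodType k) (gT : finGroupType)
    (G : {group gT}) (rho : biset gT gT -> W -> W)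
    (pT : finGroupType) (P : {group pT}) :
  simple_Bmodule G rho -> minimal_group G rho P ->
  quotient_of_Bbar G rho P /\
  (forall (hT : finGroupType) (H : {group hT}),
     quotient_of_Bbar G rho H -> subquotient H P).
Proof.
move=> Hs Hm; split; first exact: part1.
exact: part2.
Qed.
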